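(* Let $\ell_1,\dots,\ell_T$ be labels, $v_1,v_2>0$, $1\le i\le j\le T$, and suppose the optimal solution of subproblem $(i,j)$ is constant (hence equal to $r_{i,j}$). Let $r_{i,j}\le\alpha\le 1$ and consider the augmented subproblem: minimize $J_{i,j}(p_i,\dots,p_j)$ subject to $\alpha\le p_i\le p_{i+1}\le\cdots\le p_j\le 1$. Then for every RBPSR $C_\rho$, the constant solution $p_i=\cdots=p_j=\alpha$ minimizes the augmented subproblem.
   Context: A regular binary proper scoring rule (RBPSR) is a function $C_\rho:\{\theta_1,\theta_2\}\times[0,1]\to[0,\infty]$ given by $C_\rho(\theta_1,q)=\int_q^1\frac{\rho(\eta)}{\eta}\,d\eta$ and $C_\rho(\theta_2,q)=\int_0^q\frac{\rho(\eta)}{1-\eta}\,d\eta$, where $\rho$ is a probability distribution on $[0,1]$ (possibly containing Dirac point masses), and these integrals are finite except that $C_\rho(\theta_1,0)$ and $C_\rho(\theta_2,1)$ may equal $\infty$. Given labels $\ell_1,\dots,\ell_T\in\{\theta_1,\theta_2\}$ and weights $v_1,v_2>0$, write $w(\theta_1)=v_1$, $w(\theta_2)=v_2$. For $1\le i\le j\le T$, a solution of subproblem $(i,j)$ is any $p_{i,j}=(p_i,\dots,p_j)\in[0,1]^{j-i+1}$, feasible if $p_i\le\cdots\le p_j$, with objective $J_{i,j}(p_{i,j})=\sum_{t=i}^j w(\ell_t)C_\rho(\ell_t,p_t)$. The optimal solution of subproblem $(i,j)$ is a feasible solution minimizing $J_{i,j}$ among feasible solutions simultaneously for every RBPSR $C_\rho$;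 it is constant if $p_i=\cdots=p_j$. For $i\le j$, $r_{i,j}=\frac{v_1m_{i,j}}{v_1m_{i,j}+v_2n_{i,j}}$, where $m_{i,j},n_{i,j}$ are the numbers of $\theta_1$- and $\theta_2$-labels among $\ell_i,\dots,\ell_j$. *)

(* Defs.v *)
From Stdlib Require Import Reals Lra Lia List ClassicalEpsilon.
Open Scope R_scope.

(** * Extended non-negative reals [0, +oo] (only the operations we need) *)
Inductive ereal : Type := Fin (r : R) | PInf.

Definition ele (x y : ereal) : Prop :=
  match x, y with
  | _, PInf => True
  | PInf, Fin _ => False
  | Fin a, Fin b => a <= b
  end.

Definition eplus (x y : ereal) : ereal :=
  match x, y with
  | Fin a, Fin b => Fin (a + b)
  | _, _ => PInf
  end.

(* scaling by a weight c; only ever used with c > 0, so c * oo = oo *)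
Definition escale (c : R) (x : ereal) : ereal :=
  match x with
  | Fin a => Fin (c * a)
  | PInf => PInf
  end.

(* supremum in [-oo,+oo] of a set of reals (sets used here are nonempty) *)
Definition esup (S : R -> Prop) : ereal :=
  match excluded_middle_informative (bound S /\ exists x, S x) with
  | left H => Fin (proj1_sig (completeness S (proj1 H) (proj2 H)))
  | right _ => PInf
  end.

(** * Probability distributions on [0,1], given by their (right-continuous)
      cumulative distribution function F.  F(x) = rho([0,x]); rho((a,b]) = F b - F a.
      Every probability distribution on [0,1] (with or without atoms) arises
      this way, and conversely. *)
Definition is_cdf01 (F : R -> R) : Prop :=
  (forall x y, x <= y -> F x <= F y) /\
  (forall x, x < 0 -> F x = 0) /\
  (forall x, 1 <= x -> F x = 1) /\
  (forall x eps, 0 < eps -> exists d, 0 < d /\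
       forall y, x <= y < x + d -> F y - F x < eps).

(** * Lebesgue–Stieltjes integral over (a,b] of a non-negative, [0,+oo]-valued
      integrand g w.r.t. rho = dF, as the supremum of integrals of
      non-negative step functions below g:
      lower_sum F g a b s  <->  s = sum_k c_k (F x_k - F x_{k-1}) for some
      partition a = x_0 < x_1 < ... < x_n = b and constants 0 <= c_k <= g on
      (x_{k-1}, x_k]. *)
Inductive lower_sum (F : R -> R) (g : R -> ereal) : R -> R -> R -> Prop :=
| ls_nil : forall a, lower_sum F g a a 0
| ls_cons : forall a x b c s,
    a < x -> 0 <= c ->
    (forall y, a < y <= x -> ele (Fin c) (g y)) ->
    lower_sum F g x b s ->
    lower_sum F g a b (c * (F x - F a) + s).

Definition LSint (F : R -> R) (g : R -> ereal) (a b : R) : ereal :=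
  esup (lower_sum F g a b).

(* the integrands  1/eta  and  1/(1-eta)  (value +oo where the denominator is 0) *)
Definition inv_eta (e : R) : ereal := if Rlt_dec 0 e then Fin (/ e) else PInf.
Definition inv_one_minus_eta (e : R) : ereal :=
  if Rlt_dec e 1 then Fin (/ (1 - e)) else PInf.

Inductive label : Type := theta1 | theta2.

(* C_rho(theta1,q) = int_q^1 rho(eta)/eta d eta ;
   C_rho(theta2,q) = int_0^q rho(eta)/(1-eta) d eta  *)
Definition C_rho (F : R -> R) (l : label) (q : R) : ereal :=
  match l with
  | theta1 => LSint F inv_eta q 1
  | theta2 => LSint F inv_one_minus_eta 0 q
  end.

Definition weight (v1 v2 : R) (l : label) : R :=
  match l with theta1 => v1 | theta2 => v2 end.

(** * Subproblem (i,j): labels are  lab : nat -> label  (only lab 1..lab T used),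
      solutions are  p : nat -> R  (only p i .. p j used). *)
Fixpoint esum (f : nat -> ereal) (l : list nat) : ereal :=
  match l with
  | nil => Fin 0
  | t :: l' => eplus (f t) (esum f l')
  end.

Definition idx (i j : nat) : list nat := List.seq i (S j - i).

Definition J (F : R -> R) (lab : nat -> label) (v1 v2 : R) (i j : nat)
  (p : nat -> R) : ereal :=
  esum (fun t => escale (weight v1 v2 (lab t)) (C_rho F (lab t) (p t))) (idx i j).

Definition feasible (i j : nat) (p : nat -> R) : Prop :=
  (forall t, (i <= t <= j)%nat -> 0 <= p t <= 1) /\
  (forall t, (i <= t < j)%nat -> p t <= p (S t)).

Definition is_constant (i j : nat) (p : nat -> R) : Prop :=
  forall t, (i <= t <= j)%nat -> p t = p i.

(* optimal solution: feasible, and minimizes J among feasible solutions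
   simultaneously for every RBPSR *)
Definition optimal (lab : nat -> label) (v1 v2 : R) (i j : nat) (p : nat -> R) : Prop :=
  feasible i j p /\
  forall F, is_cdf01 F -> forall q, feasible i j q -> ele (J F lab v1 v2 i j p) (J F lab v1 v2 i j q).

Definition count_label (lab : nat -> label) (x : label) (i j : nat) : nat :=
  List.length (List.filter (fun t => match lab t, x with
                                    | theta1, theta1 | theta2, theta2 => true
                                    | _, _ => false end) (idx i j)).

Definition r_ij (lab : nat -> label) (v1 v2 : R) (i j : nat) : R :=
  let m := INR (count_label lab theta1 i j) in
  let n := INR (count_label lab theta2 i j) in
  v1 * m / (v1 * m + v2 * n).

(* Main.v *)
Require Import Defs.
From Stdlib Require Import Reals.
From Stdlib Require Import Lra Lia List ClassicalEpsilon.
Open Scope R_scope.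

Lemma ele_refl x : ele x x. Proof. destruct x; simpl; auto; lra. Qed.
Lemma ele_PInf x : ele x PInf. Proof. destruct x; simpl; auto. Qed.
Lemma ele_trans x y z : ele x y -> ele y z -> ele x z.
Proof. destruct x, y, z; simpl; intros; auto; try lra; contradiction. Qed.
Lemma eplus_mono x x' y y' : ele x x' -> ele y y' -> ele (eplus x y) (eplus x' y').
Proof. destruct x, x', y, y'; simpl; intros; auto; try lra; contradiction. Qed.
Lemma eplus_comm x y : eplus x y = eplus y x.
Proof. destruct x, y; simpl; auto; f_equal; ring. Qed.
Lemma escale_mono c x y : 0 <= c -> ele x y -> ele (escale c x) (escale c y).
Proof. destruct x, y; simpl; intros; auto. apply Rmult_le_compat_l; auto. Qed.
Lemma escale_eplus c x y : escale c (eplus x y) = eplus (escale c x) (escale c y).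
Proof. destruct x, y; simpl; auto; f_equal; ring. Qed.
Lemma ele_plus0l x : ele x (eplus (Fin 0) x).
Proof. destruct x; simpl; auto; lra. Qed.
Lemma ele_plus0r x : ele (eplus x (Fin 0)) x.
Proof. destruct x; simpl; auto; lra. Qed.

Lemma esum_eplus f g L : esum (fun t => eplus (f t) (g t)) L = eplus (esum f L) (esum g L).
Proof.
  induction L; simpl. f_equal; ring.
  rewrite IHL. destruct (f a), (g a), (esum f L), (esum g L); simpl; auto; f_equal; ring.
Qed.
Lemma esum_mono f g L : (forall t, In t L -> ele (f t) (g t)) -> ele (esum f L) (esum g L).
Proof.
  induction L; cbn [esum In]; intros H. simpl; lra.
  apply eplus_mono; auto.
Qed.
Lemma esum_ext f g L : (forall t, In t L -> f t = g t) -> esum f L = esum g L.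
Proof.
  induction L; simpl; intros H; auto. rewrite H, IHL; auto.
Qed.
Lemma esum_app f L1 L2 : esum f (L1 ++ L2) = eplus (esum f L1) (esum f L2).
Proof.
  induction L1; simpl. destruct (esum f L2); simpl; auto; f_equal; ring.
  rewrite IHL1. destruct (f a), (esum f L1), (esum f L2); simpl; auto; f_equal; ring.
Qed.
Fixpoint rsum (h : nat -> R) (L : list nat) : R :=
  match L with nil => 0 | t :: L' => h t + rsum h L' end.
Lemma rsum_app h L1 L2 : rsum h (L1 ++ L2) = rsum h L1 + rsum h L2.
Proof. induction L1; simpl; [ring| rewrite IHL1; ring]. Qed.
Lemma rsum_ext h h' L : (forall t, In t L -> h t = h' t) -> rsum h L = rsum h' L.
Proof. induction L; simpl; intros H; auto. rewrite H, IHL; auto. Qed.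
Lemma esum_lb f h L : (forall t, In t L -> ele (Fin (h t)) (f t)) -> ele (Fin (rsum h L)) (esum f L).
Proof.
  induction L; cbn [esum rsum In]; intros H. simpl; lra.
  change (Fin (h a + rsum h L)) with (eplus (Fin (h a)) (Fin (rsum h L))).
  apply eplus_mono; auto.
Qed.
Lemma esum_ub f h L : (forall t, In t L -> ele (f t) (Fin (h t))) -> ele (esum f L) (Fin (rsum h L)).
Proof.
  induction L; cbn [esum rsum In]; intros H. simpl; lra.
  change (Fin (h a + rsum h L)) with (eplus (Fin (h a)) (Fin (rsum h L))).
  apply eplus_mono; auto.
Qed.
Lemma esum_PInf f L t : In t L -> f t = PInf -> esum f L = PInf.
Proof.
  induction L; simpl; intros Hi Hf. contradiction.
  destruct Hi as [->|Hi]. rewrite Hf; reflexivity.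
  rewrite IHL; auto. destruct (f a); reflexivity.
Qed.

Definition lf (lab : nat -> label) (x : label) (t : nat) : bool :=
  match lab t, x with
  | theta1, theta1 | theta2, theta2 => true
  | _, _ => false end.
Definition cnt lab x L := length (filter (lf lab x) L).
Lemma cnt_eq lab x i j : count_label lab x i j = cnt lab x (idx i j).
Proof. reflexivity. Qed.
Lemma cnt_app lab x L1 L2 : cnt lab x (L1 ++ L2) = (cnt lab x L1 + cnt lab x L2)%nat.
Proof. unfold cnt. rewrite filter_app, length_app. reflexivity. Qed.
Lemma cnt_nil lab x : cnt lab x nil = 0%nat. Proof. reflexivity. Qed.
Lemma cnt_cons lab x a L : cnt lab x (a :: L) = ((if lf lab x a then 1 else 0) + cnt lab x L)%nat.
Proof. unfold cnt; simpl; destruct (lf lab x a); reflexivity. Qed.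
Lemma cnt_total lab L : (cnt lab theta1 L + cnt lab theta2 L)%nat = length L.
Proof.
  induction L; simpl; auto. rewrite !cnt_cons. unfold lf.
  destruct (lab a); simpl; lia.
Qed.
Lemma rsum_lab lab a b L :
  rsum (fun t => match lab t with theta1 => a | theta2 => b end) L =
  INR (cnt lab theta1 L) * a + INR (cnt lab theta2 L) * b.
Proof.
  induction L as [|t L IH]; cbn [rsum]. unfold cnt; simpl; ring.
  rewrite !cnt_cons. unfold lf at 1 2.
  destruct (lab t); rewrite IH, !plus_INR; simpl; ring.
Qed.
Lemma cnt0 lab L : cnt lab theta1 L = 0%nat -> forall t, In t L -> lab t = theta2.
Proof.
  induction L as [|a L IH]; simpl; intros H t Ht. contradiction.
  rewrite cnt_cons in H. unfold lf at 1 in H.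
  destruct (lab a) eqn:E; simpl in H; try discriminate.
  destruct Ht as [->|Ht]; auto.
Qed.
Lemma cnt_pos lab x L : cnt lab x L <> 0%nat -> exists t, In t L /\ lab t = x.
Proof.
  induction L as [|a L IH]; simpl; intros H. unfold cnt in H; simpl in H; lia.
  rewrite cnt_cons in H; unfold lf at 1 in H.
  destruct (lab a) eqn:E, x; simpl in H; eauto;
   destruct IH as [t [? ?]]; eauto.
Qed.

Lemma esup_ub S s : S s -> ele (Fin s) (esup S).
Proof.
  intros Hs. unfold esup. destruct (excluded_middle_informative _) as [H|H]; simpl; auto.
  destruct (completeness S (proj1 H) (proj2 H)) as [m [Hm1 Hm2]]; simpl. apply Hm1; auto.
Qed.
Lemma esup_ub_fin S s x : S s -> esup S = Fin x -> s <= x.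
Proof. intros Hs E. pose proof (esup_ub S s Hs) as H. rewrite E in H. exact H. Qed.
Lemma esup_le S M : (exists s, S s) -> (forall s, S s -> s <= M) -> ele (esup S) (Fin M).
Proof.
  intros Hne Hb. unfold esup. destruct (excluded_middle_informative _) as [H|H].
  - destruct (completeness S (proj1 H) (proj2 H)) as [m [Hm1 Hm2]]; simpl. apply Hm2. intros x Hx; auto.
  - exfalso; apply H; split; auto. exists M; intros x Hx; auto.
Qed.
Lemma esup_fin S x : esup S = Fin x -> forall M, (forall s, S s -> s <= M) -> x <= M.
Proof.
  unfold esup. destruct (excluded_middle_informative _) as [H|H]; [|discriminate].
  destruct (completeness S (proj1 H) (proj2 H)) as [m [Hm1 Hm2]]; simpl.
  intros E; injection E; intros <- M HM. apply Hm2. intros y Hy; auto.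
Qed.

Lemma ls_le F g a b s : lower_sum F g a b s -> a <= b.
Proof. induction 1; lra. Qed.

Lemma ls_zero F g a b : (forall y, ele (Fin 0) (g y)) -> a <= b -> lower_sum F g a b 0.
Proof.
  intros Hg Hab. destruct (Req_dec a b) as [<-|Hne]. constructor.
  replace 0 with (0 * (F b - F a) + 0) by ring. constructor; try lra; auto. constructor.
Qed.

Lemma inv_eta_nn y : ele (Fin 0) (inv_eta y).
Proof. unfold inv_eta; destruct (Rlt_dec 0 y); simpl; auto. apply Rlt_le, Rinv_0_lt_compat; lra. Qed.
Lemma inv_ome_nn y : ele (Fin 0) (inv_one_minus_eta y).
Proof. unfold inv_one_minus_eta; destruct (Rlt_dec y 1); simpl; auto. apply Rlt_le, Rinv_0_lt_compat; lra. Qed.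

Lemma ls_concat F g a b c s1 s2 : lower_sum F g a b s1 -> lower_sum F g b c s2 -> lower_sum F g a c (s1 + s2).
Proof.
  intros H; revert s2; induction H as [a | a x b k s Hax Hk Hg Hr IH]; intros s2 H2.
  - replace (0 + s2) with s2 by ring; auto.
  - replace (k * (F x - F a) + s + s2) with (k * (F x - F a) + (s + s2)) by ring.
    constructor; auto.
Qed.

Lemma ls_split F g a c s : lower_sum F g a c s -> forall b, a <= b <= c ->
  exists s1 s2, lower_sum F g a b s1 /\ lower_sum F g b c s2 /\ s = s1 + s2.
Proof.
  induction 1 as [a | a x c k s Hax Hk Hg Hr IH]; intros b Hb.
  - replace b with a by lra. exists 0, 0; repeat split; try constructor; ring.
  - pose proof (ls_le _ _ _ _ _ Hr) as Hxc.
    destruct (Rle_lt_dec x b) as [Hxb|Hbx].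
    + destruct (IH b ltac:(lra)) as [s1 [s2 [H1 [H2 E]]]].
      exists (k * (F x - F a) + s1), s2; repeat split; auto. constructor; auto. rewrite E; ring.
    + destruct (Req_dec a b) as [<-|Hab].
      * exists 0, (k * (F x - F a) + s); repeat split; try constructor; auto. ring.
      * exists (k * (F b - F a) + 0), (k * (F x - F b) + s); repeat split.
        -- constructor; try lra; auto. intros y Hy; apply Hg; lra. constructor.
        -- constructor; try lra; auto. intros y Hy; apply Hg; lra.
        -- ring.
Qed.

Lemma ls_scale F g h a b s : lower_sum F g a b s -> forall lam, 0 <= lam ->
  (forall y k, a < y <= b -> 0 <= k -> ele (Fin k) (g y) -> ele (Fin (lam * k)) (h y)) ->
  lower_sum F h a b (lam * s).
Proof.
  induction 1 as [a | a x b k s Hax Hk Hg Hr IH]; intros lam Hl Hh.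
  - replace (lam * 0) with 0 by ring; constructor.
  - pose proof (ls_le _ _ _ _ _ Hr) as Hxb.
    replace (lam * (k * (F x - F a) + s)) with ((lam * k) * (F x - F a) + lam * s) by ring.
    constructor; auto. apply Rmult_le_pos; auto.
    intros y Hy; apply Hh; auto; lra.
    apply IH; auto. intros y k' Hy; apply Hh; lra.
Qed.

Lemma ls_bound F g a b s M : (forall x y, x <= y -> F x <= F y) -> lower_sum F g a b s -> 0 <= M ->
  (forall y k, a < y <= b -> 0 <= k -> ele (Fin k) (g y) -> k <= M) -> s <= M * (F b - F a).
Proof.
  intros HF H; induction H as [a | a x b k s Hax Hk Hg Hr IH]; intros HM Hb.
  - nra.
  - pose proof (ls_le _ _ _ _ _ Hr) as Hxb.
    assert (k <= M) by (apply (Hb x); [lra|auto|apply Hg; lra]).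
    assert (F a <= F x) by (apply HF; lra).
    assert (s <= M * (F b - F x)) by (apply IH; auto; intros; apply (Hb y); auto; lra).
    nra.
Qed.

Lemma LS_nonneg F g a b : (forall y, ele (Fin 0) (g y)) -> a <= b -> ele (Fin 0) (LSint F g a b).
Proof. intros; apply esup_ub, ls_zero; auto. Qed.

Lemma LS_concat F g a b c : (forall y, ele (Fin 0) (g y)) -> a <= b -> b <= c ->
  ele (eplus (LSint F g a b) (LSint F g b c)) (LSint F g a c).
Proof.
  intros Hg Hab Hbc. unfold LSint.
  destruct (esup (lower_sum F g a c)) as [z|] eqn:Ez; [|apply ele_PInf].
  assert (E1: ele (esup (lower_sum F g a b)) (Fin z)).
  { apply esup_le. exists 0; apply ls_zero; auto.
    intros s1 H1. replace s1 with (s1 + 0) by ring. apply (esup_ub_fin _ _ _ (ls_concat _ _ _ _ _ _ _ H1 (ls_zero F g b c Hg Hbc)) Ez). }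
  destruct (esup (lower_sum F g a b)) as [x|] eqn:Ex; [|contradiction].
  assert (E2: ele (esup (lower_sum F g b c)) (Fin (z - x))).
  { apply esup_le. exists 0; apply ls_zero; auto.
    intros s2 H2. assert (x <= z - s2); [|lra].
    apply (esup_fin _ _ Ex). intros s1 H1.
    pose proof (esup_ub_fin _ _ _ (ls_concat _ _ _ _ _ _ _ H1 H2) Ez); lra. }
  destruct (esup (lower_sum F g b c)) as [y|]; simpl in *; [lra|contradiction].
Qed.

Lemma LS_split F g a b c : (forall y, ele (Fin 0) (g y)) -> a <= b -> b <= c ->
  ele (LSint F g a c) (eplus (LSint F g a b) (LSint F g b c)).
Proof.
  intros Hg Hab Hbc. unfold LSint.
  destruct (esup (lower_sum F g a b)) as [x|] eqn:Ex; [|apply ele_PInf].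
  destruct (esup (lower_sum F g b c)) as [y|] eqn:Ey; [|apply ele_PInf].
  simpl eplus. apply esup_le. exists 0; apply ls_zero; auto; lra.
  intros s Hs. destruct (ls_split _ _ _ _ _ Hs b ltac:(lra)) as [s1 [s2 [H1 [H2 ->]]]].
  pose proof (esup_ub_fin _ _ _ H1 Ex); pose proof (esup_ub_fin _ _ _ H2 Ey); lra.
Qed.

Definition dirac (c x : R) : R := if Rlt_dec x c then 0 else 1.
Lemma dirac_lt c x : x < c -> dirac c x = 0.
Proof. unfold dirac; destruct (Rlt_dec x c); lra. Qed.
Lemma dirac_ge c x : c <= x -> dirac c x = 1.
Proof. unfold dirac; destruct (Rlt_dec x c); lra. Qed.

Lemma dirac_cdf c : 0 < c -> c < 1 -> is_cdf01 (dirac c).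
Proof.
  intros H0 H1. repeat split.
  - intros x y Hxy. unfold dirac; destruct (Rlt_dec x c), (Rlt_dec y c); lra.
  - intros x Hx; apply dirac_lt; lra.
  - intros x Hx; apply dirac_ge; lra.
  - intros x eps He. destruct (Rlt_dec x c) as [Hx|Hx].
    + exists (c - x); split; [lra|]. intros y Hy. rewrite !dirac_lt by lra; lra.
    + exists 1; split; [lra|]. intros y Hy. rewrite !dirac_ge by lra; lra.
Qed.

Lemma dirac_A c g a b s : lower_sum (dirac c) g a b s -> (c <= a \/ b < c) -> s <= 0.
Proof.
  induction 1 as [a | a x b k s Hax Hk Hg Hr IH]; intros Hc. lra.
  pose proof (ls_le _ _ _ _ _ Hr) as Hxb.
  destruct Hc as [Hc|Hc].
  - rewrite !dirac_ge by lra. assert (s <= 0) by (apply IH; lra). nra.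
  - rewrite !dirac_lt by lra. assert (s <= 0) by (apply IH; lra). nra.
Qed.

Lemma dirac_B c g a b s G : lower_sum (dirac c) g a b s -> g c = Fin G -> 0 <= G -> s <= G.
Proof.
  induction 1 as [a | a x b k s Hax Hk Hg Hr IH]; intros Hgc HG. lra.
  pose proof (ls_le _ _ _ _ _ Hr) as Hxb.
  destruct (Rle_lt_dec c a) as [Ha|Ha].
  - rewrite !dirac_ge by lra. assert (s <= G) by (apply IH; auto). nra.
  - destruct (Rle_lt_dec c x) as [Hx|Hx].
    + rewrite dirac_ge, dirac_lt by lra.
      assert (k <= G) by (pose proof (Hg c ltac:(lra)) as Hk'; rewrite Hgc in Hk'; exact Hk').
      assert (s <= 0) by (apply (dirac_A c g x b s); auto; lra). nra.
    + rewrite !dirac_lt by lra. assert (s <= G) by (apply IH; auto). nra.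
Qed.

Lemma inv_eta_pos c : 0 < c -> inv_eta c = Fin (/ c).
Proof. unfold inv_eta; destruct (Rlt_dec 0 c); [reflexivity|lra]. Qed.
Lemma inv_ome_lt c : c < 1 -> inv_one_minus_eta c = Fin (/ (1 - c)).
Proof. unfold inv_one_minus_eta; destruct (Rlt_dec c 1); [reflexivity|lra]. Qed.

Lemma LS_dirac_B c g a b G : (forall y, ele (Fin 0) (g y)) -> a <= b -> g c = Fin G -> 0 <= G ->
  ele (LSint (dirac c) g a b) (Fin G).
Proof.
  intros Hg Hab Hgc HG. apply esup_le. exists 0; apply ls_zero; auto.
  intros s Hs; apply (dirac_B c g a b s G); auto.
Qed.
Lemma LS_dirac_A c g a b : (forall y, ele (Fin 0) (g y)) -> a <= b -> (c <= a \/ b < c) ->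
  ele (LSint (dirac c) g a b) (Fin 0).
Proof.
  intros Hg Hab Hc. apply esup_le. exists 0; apply ls_zero; auto.
  intros s Hs; apply (dirac_A c g a b s); auto.
Qed.

Lemma escale_fin_le w x X : 0 <= w -> ele X (Fin x) -> ele (escale w X) (Fin (w * x)).
Proof. intros; apply (escale_mono w X (Fin x)); auto. Qed.
Lemma escale_fin_ge w x X : 0 <= w -> ele (Fin x) X -> ele (Fin (w * x)) (escale w X).
Proof. intros; apply (escale_mono w (Fin x) X); auto. Qed.

Lemma idx_split i j k : (i <= k <= S j)%nat -> idx i j = seq i (k - i) ++ idx k j.
Proof.
  intros H. unfold idx. replace (S j - i)%nat with ((k - i) + (S j - k))%nat by lia.
  rewrite seq_app. f_equal. f_equal. lia.
Qed.
Lemma in_idx t i j : In t (idx i j) -> (i <= t <= j)%nat.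
Proof. unfold idx; rewrite in_seq; lia. Qed.
Lemma in_pre t i k : In t (seq i (k - i)) -> (i <= t < k)%nat.
Proof. rewrite in_seq; lia. Qed.

Lemma escale_nonneg w X : 0 <= w -> ele (Fin 0) X -> ele (Fin 0) (escale w X).
Proof. destruct X; simpl; auto; intros; nra. Qed.

Lemma J_const_ext F lab v1 v2 i j p : is_constant i j p ->
  J F lab v1 v2 i j p = J F lab v1 v2 i j (fun _ => p i).
Proof.
  intros H. unfold J. apply esum_ext. intros t Ht. rewrite (H t (in_idx _ _ _ Ht)). reflexivity.
Qed.

Lemma dirac_claim lab v1 v2 i j k (p : nat -> R) c :
  0 < v1 -> 0 < v2 -> (i <= k)%nat -> (k <= j)%nat ->
  optimal lab v1 v2 i j p -> is_constant i j p ->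
  v1 * INR (cnt lab theta1 (idx i j)) <
     c * (v1 * INR (cnt lab theta1 (idx i j)) + v2 * INR (cnt lab theta2 (idx i j))) ->
  c < 1 ->
  v1 * INR (cnt lab theta1 (idx k j)) * (1 - c) <= v2 * INR (cnt lab theta2 (idx k j)) * c.
Proof.
  intros Hv1 Hv2 Hik Hkj [Hfp Hmin] Hconst Hc Hc1.
  set (M := INR (cnt lab theta1 (idx i j))) in *.
  set (N := INR (cnt lab theta2 (idx i j))) in *.
  assert (HM0 : 0 <= M) by apply pos_INR.
  assert (HN0 : 0 <= N) by apply pos_INR.
  assert (HS0 : 0 <= v1 * M + v2 * N) by nra.
  assert (HvM : 0 <= v1 * M) by nra.
  assert (Hc0 : 0 < c) by (destruct (Rle_lt_dec c 0); [nra|auto]).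
  set (F := dirac c).
  assert (HF : is_cdf01 F) by (apply dirac_cdf; auto).
  set (qs := fun t => if (t <? k)%nat then 0 else 1).
  assert (Hfq : feasible i j qs).
  { split; intros t Ht; unfold qs.
    - destruct (Nat.ltb_spec t k); lra.
    - destruct (Nat.ltb_spec t k), (Nat.ltb_spec (S t) k); try lra; lia. }
  pose proof (Hmin F HF qs Hfq) as Hle.
  assert (Hic : 0 < / c) by (apply Rinv_0_lt_compat; lra).
  assert (Hio : 0 < / (1 - c)) by (apply Rinv_0_lt_compat; lra).
  set (h := fun t => if (t <? k)%nat then match lab t with theta1 => v1 * / c | theta2 => 0 end
                     else match lab t with theta1 => 0 | theta2 => v2 * / (1 - c) end).
  assert (Hup : ele (J F lab v1 v2 i j qs) (Fin (rsum h (idx i j)))).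
  { unfold J. apply esum_ub. intros t _. unfold qs, h.
    destruct (t <? k); destruct (lab t); cbn [weight C_rho].
    - apply escale_fin_le; [lra|]. apply LS_dirac_B; auto using inv_eta_nn; try lra.
      apply inv_eta_pos; lra.
    - apply ele_trans with (Fin (v2 * 0)); [apply escale_fin_le; [lra|] | simpl; lra].
      apply LS_dirac_A; auto using inv_ome_nn; lra.
    - apply ele_trans with (Fin (v1 * 0)); [apply escale_fin_le; [lra|] | simpl; lra].
      apply LS_dirac_A; auto using inv_eta_nn; lra.
    - apply escale_fin_le; [lra|]. apply LS_dirac_B; auto using inv_ome_nn; try lra.
      apply inv_ome_lt; lra. }
  assert (Hsplit : idx i j = seq i (k - i) ++ idx k j) by (apply idx_split; lia).
  assert (Hh : rsum h (idx i j) =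
     INR (cnt lab theta1 (seq i (k - i))) * (v1 * / c) + INR (cnt lab theta2 (idx k j)) * (v2 * / (1 - c))).
  { rewrite Hsplit, rsum_app.
    rewrite (rsum_ext h (fun t => match lab t with theta1 => v1 * / c | theta2 => 0 end)).
    rewrite (rsum_ext h (fun t => match lab t with theta1 => 0 | theta2 => v2 * / (1 - c) end) (idx k j)).
    rewrite !rsum_lab; ring.
    - intros t Ht. apply in_idx in Ht. unfold h. destruct (Nat.ltb_spec t k); [lia|reflexivity].
    - intros t Ht. apply in_pre in Ht. unfold h. destruct (Nat.ltb_spec t k); [reflexivity|lia]. }
  assert (Hlow : ele (Fin (v1 * M * / c)) (J F lab v1 v2 i j p)).
  { rewrite J_const_ext by auto.
    assert (Hp : 0 <= p i <= 1) by (apply (proj1 Hfp); lia).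
    set (c0 := p i) in *.
    destruct (Rlt_le_dec c0 c) as [Hlt|Hge].
    - apply ele_trans with (Fin (rsum (fun t => match lab t with theta1 => v1 * / c | theta2 => 0 end) (idx i j))).
      + rewrite rsum_lab. fold M. simpl. right; ring.
      + unfold J. apply esum_lb. intros t _. destruct (lab t); cbn [weight C_rho].
        * apply escale_fin_ge; [lra|].
          apply ele_trans with (Fin (/ c * (F c - F c0) + (0 * (F 1 - F c) + 0))).
          { unfold F. rewrite (dirac_ge c c), (dirac_ge c 1), (dirac_lt c c0) by lra. simpl; right; ring. }
          apply esup_ub. constructor; try lra.
          { intros y Hy. rewrite inv_eta_pos by lra. simpl. apply Rinv_le_contravar; lra. }
          constructor; try lra. { intros; apply inv_eta_nn. } constructor.
        * apply escale_nonneg; [lra|]. apply LS_nonneg; auto using inv_ome_nn; lra.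
    - set (A := v1 * M). set (B := v2 * N).
      set (delta := B * c - A * (1 - c)).
      assert (Hd : 0 < delta) by (unfold delta, A, B in *; nra).
      set (d2 := delta / (2 * (A + 1))).
      assert (HA : 0 <= A) by (unfold A; nra).
      assert (Hd2 : d2 * (2 * (A + 1)) = delta) by (unfold d2; field; lra).
      assert (Hd2p : 0 < d2) by (unfold d2; apply Rdiv_lt_0_compat; lra).
      set (e := Rmin (c / 2) d2).
      assert (He0 : 0 < e) by (apply Rmin_pos; lra).
      assert (He1 : e <= c / 2) by apply Rmin_l.
      assert (He2 : e <= d2) by apply Rmin_r.
      set (c' := c - e).
      assert (HAc : A * (1 - c') <= B * c).
      { unfold c'. assert (A * e <= A * d2) by (apply Rmult_le_compat_l; lra).
        assert (A * d2 <= delta / 2) by nra. unfold delta in *. nra. }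
      assert (Hio' : 0 < / (1 - c')) by (apply Rinv_0_lt_compat; unfold c'; lra).
      apply ele_trans with (Fin (rsum (fun t => match lab t with theta1 => 0 | theta2 => v2 * / (1 - c') end) (idx i j))).
      + rewrite rsum_lab. fold N. simpl.
        assert (E1 : c * / c = 1) by (field; lra).
        assert (E2 : (1 - c') * / (1 - c') = 1) by (field; unfold c'; lra).
        assert (HB : A * / c * ((1 - c') * / (1 - c')) <= B * c * (/ c * / (1 - c'))).
        { replace (A * / c * ((1 - c') * / (1 - c'))) with (A * (1 - c') * (/ c * / (1 - c'))) by ring.
          apply Rmult_le_compat_r; auto. apply Rlt_le, Rmult_lt_0_compat; auto. }
        rewrite E2 in HB. replace (B * c * (/ c * / (1 - c'))) with (B * / (1 - c') * (c * / c)) in HB by ring.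
        rewrite E1 in HB. unfold A, B, M, N in *. nra.
      + unfold J. apply esum_lb. intros t _. destruct (lab t); cbn [weight C_rho].
        * apply escale_nonneg; [lra|]. apply LS_nonneg; auto using inv_eta_nn; lra.
        * apply escale_fin_ge; [lra|].
          apply ele_trans with (Fin (0 * (F c' - F 0) + (/ (1 - c') * (F c0 - F c') + 0))).
          { unfold F. rewrite (dirac_ge c c0), (dirac_lt c c'), (dirac_lt c 0) by (unfold c'; lra). simpl; right; ring. }
          apply esup_ub. constructor; try (unfold c'; lra).
          { intros; apply inv_ome_nn. }
          constructor; try lra; try (unfold c'; lra).
          { intros y Hy. unfold inv_one_minus_eta. destruct (Rlt_dec y 1); simpl; auto.
            apply Rinv_le_contravar; unfold c' in *; lra. }
          constructor. }
  pose proof (ele_trans _ _ _ (ele_trans _ _ _ Hlow Hle) Hup) as Hall.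
  simpl in Hall. rewrite Hh in Hall.
  assert (EM : M = INR (cnt lab theta1 (seq i (k - i))) + INR (cnt lab theta1 (idx k j)))
    by (unfold M; rewrite Hsplit at 1; rewrite cnt_app, plus_INR; reflexivity).
  rewrite EM in Hall.
  set (M2 := INR (cnt lab theta1 (idx k j))) in *.
  set (N2 := INR (cnt lab theta2 (idx k j))) in *.
  assert (H1 : v1 * M2 * / c <= v2 * N2 * / (1 - c)) by nra.
  assert (E1 : c * / c = 1) by (field; lra).
  assert (E2 : (1 - c) * / (1 - c) = 1) by (field; lra).
  assert (Hpos : 0 <= c * (1 - c)) by nra.
  pose proof (Rmult_le_compat_r _ _ _ Hpos H1) as H2.
  replace (v1 * M2 * / c * (c * (1 - c))) with (v1 * M2 * (1 - c) * (c * / c)) in H2 by ring.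
  replace (v2 * N2 * / (1 - c) * (c * (1 - c))) with (v2 * N2 * c * ((1 - c) * / (1 - c))) in H2 by ring.
  rewrite E1, E2, !Rmult_1_r in H2. exact H2.
Qed.

Lemma div_lt_l a D c : 0 < D -> a / D < c -> a < c * D.
Proof. intros HD H. assert (E : a = (a / D) * D) by (field; lra). rewrite E; nra. Qed.
Lemma div_le_l a D c : 0 < D -> a / D <= c -> a <= c * D.
Proof. intros HD H. assert (E : a = (a / D) * D) by (field; lra). rewrite E; nra. Qed.
Lemma div_le_r a D c : 0 < D -> a <= c * D -> a / D <= c.
Proof. intros HD H. assert (E : a / D = a * / D) by reflexivity.
  assert (0 < / D) by (apply Rinv_0_lt_compat; auto).
  assert (E2 : c = c * D * / D) by (field; lra). rewrite E2. unfold Rdiv. nra. Qed.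

Lemma cnt_len_pos lab i j : (i <= j)%nat ->
  1 <= INR (cnt lab theta1 (idx i j)) + INR (cnt lab theta2 (idx i j)).
Proof.
  intros H. rewrite <- plus_INR, cnt_total. unfold idx. rewrite length_seq.
  replace 1 with (INR 1) by reflexivity. apply le_INR. lia.
Qed.

Lemma suffix_prop lab v1 v2 i j k : 0 < v1 -> 0 < v2 -> (i <= k)%nat -> (k <= j)%nat ->
  (exists p, optimal lab v1 v2 i j p /\ is_constant i j p) ->
  r_ij lab v1 v2 k j <= r_ij lab v1 v2 i j.
Proof.
  intros Hv1 Hv2 Hik Hkj [p [Hopt Hc]].
  pose proof (dirac_claim lab v1 v2 i j k p) as Cl.
  unfold r_ij. rewrite !cnt_eq.
  pose proof (cnt_len_pos lab i j ltac:(lia)) as L1.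
  pose proof (cnt_len_pos lab k j ltac:(lia)) as L2.
  set (M := INR (cnt lab theta1 (idx i j))) in *.
  set (N := INR (cnt lab theta2 (idx i j))) in *.
  set (M2 := INR (cnt lab theta1 (idx k j))) in *.
  set (N2 := INR (cnt lab theta2 (idx k j))) in *.
  assert (0 <= M) by apply pos_INR. assert (0 <= N) by apply pos_INR.
  assert (0 <= M2) by apply pos_INR. assert (0 <= N2) by apply pos_INR.
  assert (HD : 0 < v1 * M + v2 * N) by (destruct (Rle_lt_dec M 0); nra).
  assert (HD2 : 0 < v1 * M2 + v2 * N2) by (destruct (Rle_lt_dec M2 0); nra).
  destruct (Rle_lt_dec (v1 * M2 / (v1 * M2 + v2 * N2)) (v1 * M / (v1 * M + v2 * N))) as [Hle|Hlt]; auto.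
  exfalso.
  set (r := v1 * M / (v1 * M + v2 * N)) in *.
  set (r2 := v1 * M2 / (v1 * M2 + v2 * N2)) in *.
  assert (Hr0 : 0 <= r) by (unfold r; apply Rmult_le_pos; [nra| apply Rlt_le, Rinv_0_lt_compat; auto]).
  assert (Hr2 : r2 <= 1) by (unfold r2; apply div_le_r; nra).
  set (c := (r + r2) / 2).
  assert (Hq1 : v1 * M < c * (v1 * M + v2 * N)) by (apply div_lt_l; auto; fold r; unfold c; lra).
  pose proof (Cl c Hv1 Hv2 Hik Hkj Hopt Hc Hq1 ltac:(unfold c; lra)) as Hq2.
  assert (H3 : r2 <= c) by (unfold r2; apply div_le_r; auto; nra).
  unfold c in H3; lra.
Qed.

Lemma suffix_step F lab v1 v2 L alpha b' b : is_cdf01 F -> 0 < v1 -> 0 < v2 -> 0 <= alpha -> alpha < 1 ->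
  alpha <= b' -> b' <= b -> b <= 1 ->
  v1 * INR (cnt lab theta1 L) <= alpha * (v1 * INR (cnt lab theta1 L) + v2 * INR (cnt lab theta2 L)) ->
  ele (esum (fun t => escale (weight v1 v2 (lab t)) (C_rho F (lab t) b')) L)
      (esum (fun t => escale (weight v1 v2 (lab t)) (C_rho F (lab t) b)) L).
Proof.
  intros HF Hv1 Hv2 Ha0 Ha1 Hab' Hbb Hb1 Hr.
  destruct HF as [Hmono _].
  apply ele_trans with (esum (fun t => eplus
     (match lab t with theta1 => escale v1 (LSint F inv_eta b' b) | theta2 => Fin 0 end)
     (match lab t with theta1 => escale v1 (LSint F inv_eta b 1) | theta2 => escale v2 (LSint F inv_one_minus_eta 0 b') end)) L).
  { apply esum_mono; intros t _; destruct (lab t); cbn [weight C_rho].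
    - rewrite <- escale_eplus. apply escale_mono; [lra|]. apply LS_split; auto using inv_eta_nn; lra.
    - apply ele_plus0l. }
  apply ele_trans with (esum (fun t => eplus
     (match lab t with theta1 => escale v1 (LSint F inv_eta b 1) | theta2 => escale v2 (LSint F inv_one_minus_eta 0 b') end)
     (match lab t with theta1 => Fin 0 | theta2 => escale v2 (LSint F inv_one_minus_eta b' b) end)) L).
  2: { apply esum_mono; intros t _; destruct (lab t); cbn [weight C_rho].
    - apply ele_plus0r.
    - rewrite <- escale_eplus. apply escale_mono; [lra|]. apply LS_concat; auto using inv_ome_nn; lra. }
  rewrite !esum_eplus. rewrite (eplus_comm (esum _ L) (esum (fun t => match lab t with theta1 => Fin 0 | theta2 => _ end) L)).
  apply eplus_mono; [|apply ele_refl].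
  assert (HQ0 : ele (Fin 0) (esum (fun t => match lab t with theta1 => Fin 0 | theta2 => escale v2 (LSint F inv_one_minus_eta b' b) end) L)).
  { apply ele_trans with (Fin (rsum (fun t => match lab t with theta1 => 0 | theta2 => 0 end) L)).
    { rewrite rsum_lab; simpl; right; ring. }
    apply esum_lb; intros t _; destruct (lab t); [simpl; lra|].
    apply escale_nonneg; [lra|]. apply LS_nonneg; auto using inv_ome_nn; lra. }
  destruct (Nat.eq_dec (cnt lab theta1 L) 0) as [Hm0|Hm0].
  { apply ele_trans with (Fin 0); auto.
    apply ele_trans with (Fin (rsum (fun t => match lab t with theta1 => 0 | theta2 => 0 end) L)).
    - apply esum_ub; intros t Ht. rewrite (cnt0 _ _ Hm0 t Ht); simpl; lra.
    - rewrite rsum_lab; simpl; right; ring. }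
  assert (Hm : 1 <= INR (cnt lab theta1 L)) by (replace 1 with (INR 1) by reflexivity; apply le_INR; lia).
  assert (Hn0 : 0 <= INR (cnt lab theta2 L)) by apply pos_INR.
  set (m := INR (cnt lab theta1 L)) in *.
  assert (Halpha : 0 < alpha) by (destruct (Rle_lt_dec alpha 0) as [H0|H0]; [assert (alpha = 0) by lra; subst alpha; nra|auto]).
  destruct (Nat.eq_dec (cnt lab theta2 L) 0) as [Hn|Hn].
  { exfalso. rewrite Hn in Hr. simpl in Hr. assert (0 < v1 * m) by nra.
    assert (0 < v1 * m * (1 - alpha)) by (apply Rmult_lt_0_compat; lra). nra. }
  assert (Hn1 : 1 <= INR (cnt lab theta2 L)) by (replace 1 with (INR 1) by reflexivity; apply le_INR; lia).
  set (n := INR (cnt lab theta2 L)) in *.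
  assert (HI1 : ele (LSint F inv_eta b' b) (Fin (/ b' * (F b - F b')))).
  { apply esup_le. exists 0; apply ls_zero; auto using inv_eta_nn.
    intros s Hs. apply (ls_bound F inv_eta b' b s); auto.
    apply Rlt_le, Rinv_0_lt_compat; lra.
    intros y k Hy Hk Hg. rewrite inv_eta_pos in Hg by lra. simpl in Hg.
    assert (/ y <= / b') by (apply Rinv_le_contravar; lra). lra. }
  destruct (LSint F inv_eta b' b) as [x1|] eqn:EI1; [|contradiction].
  apply ele_trans with (Fin (rsum (fun t => match lab t with theta1 => v1 * x1 | theta2 => 0 end) L)).
  { apply esum_ub; intros t _; destruct (lab t); simpl; lra. }
  rewrite rsum_lab. fold m n.
  destruct (LSint F inv_one_minus_eta b' b) as [x2|] eqn:EI2.
  2: { destruct (cnt_pos lab theta2 L Hn) as [t [Ht Hl]].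
       rewrite (esum_PInf _ L t Ht); [apply ele_PInf|]. rewrite Hl; reflexivity. }
  apply ele_trans with (Fin (rsum (fun t => match lab t with theta1 => 0 | theta2 => v2 * x2 end) L)).
  2: { apply esum_lb; intros t _; destruct (lab t); simpl; lra. }
  rewrite rsum_lab. fold m n. simpl.
  set (lam := (m * v1) / (n * v2)).
  assert (Hlam : lam * (n * v2) = m * v1) by (unfold lam; field; lra).
  assert (Hlam0 : 0 < lam) by (unfold lam; apply Rdiv_lt_0_compat; nra).
  assert (Hx1 : x1 <= x2 / lam).
  { apply (esup_fin _ _ EI1). intros s Hs.
    assert (Hs2 : lower_sum F inv_one_minus_eta b' b (lam * s)).
    { apply (ls_scale F inv_eta); auto; [lra|].
      intros y k Hy Hk Hg. rewrite inv_eta_pos in Hg by lra. simpl in Hg.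
      unfold inv_one_minus_eta. destruct (Rlt_dec y 1) as [Hy1|]; simpl; auto.
      assert (0 <= (y - alpha) * (v1 * m + v2 * n)) by (apply Rmult_le_pos; nra).
      assert (Hry : m * v1 <= y * (m * v1 + n * v2)) by nra.
      assert (Hl1 : lam * (1 - y) <= y).
      { assert (lam * (1 - y) * (n * v2) <= y * (n * v2)) by nra.
        assert (0 < n * v2) by nra.
        apply (Rmult_le_reg_r (n * v2)); auto. }
      assert (Ey : y * / y = 1) by (field; lra).
      assert (Eo : (1 - y) * / (1 - y) = 1) by (field; lra).
      assert (0 < / y) by (apply Rinv_0_lt_compat; lra).
      assert (0 < / (1 - y)) by (apply Rinv_0_lt_compat; lra).
      assert (lam * k <= lam * / y) by nra.
      assert (lam * / y = lam * (1 - y) * (/ y * / (1 - y))) by (field; lra).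
      assert (lam * (1 - y) * (/ y * / (1 - y)) <= y * (/ y * / (1 - y))) by
        (apply Rmult_le_compat_r; [nra|auto]).
      assert (y * (/ y * / (1 - y)) = / (1 - y)) by (field; lra).
      lra. }
    pose proof (esup_ub_fin _ _ _ Hs2 EI2) as H.
    assert (E : s = (lam * s) / lam) by (field; lra). rewrite E.
    unfold Rdiv. apply Rmult_le_compat_r; auto. apply Rlt_le, Rinv_0_lt_compat; auto. }
  assert (lam * x1 <= x2).
  { assert (E : x2 = (x2 / lam) * lam) by (field; lra). rewrite E. nra. }
  replace (m * (v1 * x1) + n * 0) with (m * v1 * x1) by ring. rewrite <- Hlam.
  assert (0 <= (n * v2) * (x2 - lam * x1)) by (apply Rmult_le_pos; nra). nra.
Qed.

Lemma layer F lab v1 v2 i j k alpha b' b (u u' : nat -> R) : is_cdf01 F -> 0 < v1 -> 0 < v2 ->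
  0 <= alpha -> alpha < 1 -> (i <= k)%nat -> (k <= j)%nat -> alpha <= b' -> b' <= b -> b <= 1 ->
  r_ij lab v1 v2 k j <= alpha ->
  (forall t, (i <= t < k)%nat -> u t = u' t) ->
  (forall t, (k <= t <= j)%nat -> u t = b' /\ u' t = b) ->
  ele (J F lab v1 v2 i j u) (J F lab v1 v2 i j u').
Proof.
  intros HF Hv1 Hv2 Ha0 Ha1 Hik Hkj Hab' Hbb Hb1 Hr Hpre Hsuf.
  unfold J. rewrite (idx_split i j k) by lia. rewrite !esum_app. apply eplus_mono.
  - erewrite esum_ext; [apply ele_refl|]. intros t Ht; apply in_pre in Ht. simpl. rewrite Hpre; auto.
  - rewrite (esum_ext (fun t => escale (weight v1 v2 (lab t)) (C_rho F (lab t) (u t)))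
                      (fun t => escale (weight v1 v2 (lab t)) (C_rho F (lab t) b'))).
    rewrite (esum_ext (fun t => escale (weight v1 v2 (lab t)) (C_rho F (lab t) (u' t)))
                      (fun t => escale (weight v1 v2 (lab t)) (C_rho F (lab t) b))).
    + apply (suffix_step F lab v1 v2 (idx k j) alpha b' b); auto.
      unfold r_ij in Hr. rewrite !cnt_eq in Hr.
      pose proof (cnt_len_pos lab k j Hkj).
      assert (0 <= INR (cnt lab theta1 (idx k j))) by apply pos_INR.
      assert (0 <= INR (cnt lab theta2 (idx k j))) by apply pos_INR.
      apply div_le_l in Hr; auto.
      destruct (Rle_lt_dec (INR (cnt lab theta1 (idx k j))) 0); nra.
    + intros t Ht; apply in_idx in Ht. rewrite (proj2 (Hsuf t ltac:(lia))). reflexivity.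
    + intros t Ht; apply in_idx in Ht. rewrite (proj1 (Hsuf t ltac:(lia))). reflexivity.
Qed.

Lemma feas_mono i j q : feasible i j q -> forall d s, (i <= s)%nat -> (s + d <= j)%nat -> q s <= q (s + d)%nat.
Proof.
  intros [_ H] d. induction d; intros s H1 H2. rewrite Nat.add_0_r; lra.
  replace (s + S d)%nat with (S (s + d)) by lia.
  apply Rle_trans with (q (s + d)%nat); [apply IHd; lia| apply H; lia].
Qed.
Lemma feas_mono' i j q : feasible i j q -> forall s t, (i <= s)%nat -> (s <= t)%nat -> (t <= j)%nat -> q s <= q t.
Proof.
  intros Hf s t H1 H2 H3. replace t with (s + (t - s))%nat by lia. apply (feas_mono i j); auto; lia.
Qed.

Lemma r_nonneg lab v1 v2 i j : 0 < v1 -> 0 < v2 -> (i <= j)%nat -> 0 <= r_ij lab v1 v2 i j.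
Proof.
  intros Hv1 Hv2 Hij. unfold r_ij. rewrite !cnt_eq.
  pose proof (cnt_len_pos lab i j Hij).
  assert (0 <= INR (cnt lab theta1 (idx i j))) by apply pos_INR.
  assert (0 <= INR (cnt lab theta2 (idx i j))) by apply pos_INR.
  apply Rmult_le_pos; [nra|]. apply Rlt_le, Rinv_0_lt_compat.
  destruct (Rle_lt_dec (INR (cnt lab theta1 (idx i j))) 0); nra.
Qed.

Theorem lemma4p9 (T : nat) (lab : nat -> label) (v1 v2 : R) (i j : nat) (alpha : R) :
  0 < v1 -> 0 < v2 ->
  (1 <= i)%nat -> (i <= j)%nat -> (j <= T)%nat ->
  (exists p, optimal lab v1 v2 i j p /\ is_constant i j p) ->
  r_ij lab v1 v2 i j <= alpha -> alpha <= 1 ->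
  forall F, is_cdf01 F ->
  forall q, feasible i j q -> alpha <= q i ->
    ele (J F lab v1 v2 i j (fun _ => alpha)) (J F lab v1 v2 i j q).
Proof.
  intros Hv1 Hv2 Hi Hij HjT Hex Hr Ha1 F HF q Hq Hqi.
  pose proof (feas_mono' i j q Hq) as Hm.
  assert (Hsuf : forall k, (i <= k)%nat -> (k <= j)%nat -> r_ij lab v1 v2 k j <= alpha).
  { intros k H1 H2. apply Rle_trans with (r_ij lab v1 v2 i j); auto. apply suffix_prop; auto. }
  pose proof (r_nonneg lab v1 v2 i j Hv1 Hv2 Hij) as Hr0.
  destruct (Req_dec alpha 1) as [Ha|Ha].
  { subst alpha. unfold J. erewrite esum_ext; [apply ele_refl|].
    intros t Ht; apply in_idx in Ht. simpl.
    assert (q t <= 1) by (apply (proj1 Hq); lia).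
    assert (q i <= q t) by (apply Hm; lia).
    replace (q t) with 1 by lra. reflexivity. }
  assert (Ha' : alpha < 1) by lra.
  assert (Hch : forall d, (i + d <= j)%nat ->
     ele (J F lab v1 v2 i j (fun _ => alpha)) (J F lab v1 v2 i j (fun t => Rmin (q t) (q (i + d)%nat)))).
  { induction d; intros Hd.
    - rewrite Nat.add_0_r. apply (layer F lab v1 v2 i j i alpha alpha (q i)); auto; try lra; try lia.
      + apply (proj1 Hq); lia.
      + intros t Ht. split; auto. apply Rmin_right. apply Hm; lia.
    - apply ele_trans with (J F lab v1 v2 i j (fun t => Rmin (q t) (q (i + d)%nat))); [apply IHd; lia|].
      apply (layer F lab v1 v2 i j (i + S d)%nat alpha (q (i + d)%nat) (q (i + S d)%nat)); auto; try lra; try lia.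
      + apply Rle_trans with (q i); auto. apply Hm; lia.
      + apply Hm; lia.
      + apply (proj1 Hq); lia.
      + apply Hsuf; lia.
      + intros t Ht. rewrite !Rmin_left; auto; apply Hm; lia.
      + intros t Ht. rewrite !Rmin_right; auto; apply Hm; lia. }
  specialize (Hch (j - i)%nat ltac:(lia)).
  replace (i + (j - i))%nat with j in Hch by lia.
  apply ele_trans with (1 := Hch). unfold J. erewrite esum_ext; [apply ele_refl|].
  intros t Ht; apply in_idx in Ht. simpl. rewrite Rmin_left; auto. apply Hm; lia.
Qed.
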